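(* Let $(T,f,(\le_h))$ be an ordered merge tree. Define the relation $\sqsubseteq_L$ on the leaf set $L(T)$ by: $u_1\sqsubseteq_L u_2$ iff $\mathrm{anc}_h(u_1)\le_h\mathrm{anc}_h(u_2)$, where $h=\max(f(u_1),f(u_2))$. Then $\sqsubseteq_L$ is a total order on $L(T)$.
   Context: A merge tree $(T,f)$: a finite rooted tree $T$ identified with its topological realisation, with a continuous $f\colon T\to\mathbb{R}\cup\{\infty\}$ strictly increasing towards the root, $f(v)=\infty$ iff $v$ is the root; lowest leaf at height $0$; $L(T)$ is the set of leaves. $x_1\preceq x_2$ iff there is an $f$-increasing path from $x_1$ to $x_2$; $\mathrm{anc}_h(x)$ is the unique ancestor of $x$ at height $h\ge f(x)$; $\mathbb{L}_h=\{x:f(x)=h\}$. A layer-order is a family $(\le_h)_{h\ge0}$ of total orders on the $\mathbb{L}_h$ that is consistent: for $h_1\le h_2$ and $x_1,x_2\in\mathbb{L}_{h_1}$, $x_1\le_{h_1}x_2$ implies $\mathrm{anc}_{h_2}(x_1)\le_{h_2}\mathrm{anc}_{h_2}(x_2)$. An ordered merge tree is $(T,f,(\le_h))$. *)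

(* Defs.v *)
From HB Require Import structures.
From mathcomp Require Import all_boot all_order all_algebra.
From mathcomp Require Import reals.
Set Implicit Arguments. Unset Strict Implicit. Unset Printing Implicit Defensive.
Import Order.TTheory GRing.Theory Num.Theory.
Local Open Scope ring_scope.

(* A merge tree (T, f).
   - The underlying finite rooted tree has vertex set [mt_V], root [mt_root],
     and parent map [mt_par] (with par root = root); every vertex reaches the
     root by iterating [mt_par], so the parent graph is a tree rooted at root.
   - [mt_f v] is the (finite, real) height of a non-root vertex v; the root
     has height +infinity (it is never used as a real number).
   - f strictly increases towards the root: f v < f (par v) whenever both are
     non-root (an edge into the root goes up to +infinity).
   - the lowest leaf is at height 0.
   Points of the topological realisation.  Since f is continuous and strictly
   increasing along every edge, a point of the edge [v, par v) is determined
   by v and its height t.  So a non-root point of |T| is encoded uniquely by a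
   pair (v, t) : V * R with v non-root and f v <= t < f (par v) (the upper bound
   being +infinity when par v is the root); t is its f-value.  The vertex v
   itself is the point (v, f v).  The root (f = infinity) never lies in a
   layer L_h (h real), so it is not encoded. *)

Record merge_tree (R : realType) := MergeTree {
  mt_V : finType;
  mt_root : mt_V;
  mt_par : mt_V -> mt_V;
  mt_f : mt_V -> R;
  mt_par_root : mt_par mt_root = mt_root;
  mt_rooted : forall v, exists n, iter n mt_par v = mt_root;
  mt_incr : forall v, v != mt_root -> mt_par v != mt_root ->
                      mt_f v < mt_f (mt_par v);
  mt_lowest_leaf :
    (exists2 l, (l != mt_root) && [forall w, mt_par w != l] & mt_f l = 0) /\
    (forall l, (l != mt_root) && [forall w, mt_par w != l] -> 0 <= mt_f l)
}.

Section MergeTreeDefs.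
Variables (R : realType) (MT : merge_tree R).

Local Notation V := (mt_V MT).
Local Notation root := (@mt_root _ MT).
Local Notation par := (@mt_par _ MT).
Local Notation f := (@mt_f _ MT).

Definition is_leaf (v : V) : bool := (v != root) && [forall w : V, par w != v].

Definition is_point (p : V * R) : bool :=
  [&& p.1 != root, f p.1 <= p.2 & (par p.1 == root) || (p.2 < f (par p.1))].

Definition vpt (v : V) : V * R := (v, f v).

Definition in_layer (h : R) (p : V * R) : Prop := is_point p /\ p.2 = h.

(* x1 <= x2 (x1 "precedes" x2): there is an f-increasing path from x1 to x2,
   i.e. x2's edge is reached from x1's edge by going up and f(x1) <= f(x2). *)
Definition mt_prec (x y : V * R) : Prop :=
  [/\ is_point x, is_point y, (exists k, iter k par x.1 = y.1) & x.2 <= y.2].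

Definition is_anc (h : R) (x y : V * R) : Prop := mt_prec x y /\ y.2 = h.

Definition layer_order (le : R -> V * R -> V * R -> Prop) : Prop :=
  (forall h, 0 <= h ->
     [/\ (forall x, in_layer h x -> le h x x),
         (forall x y, in_layer h x -> in_layer h y ->
                      le h x y -> le h y x -> x = y),
         (forall x y z, in_layer h x -> in_layer h y -> in_layer h z ->
                        le h x y -> le h y z -> le h x z)
       & (forall x y, in_layer h x -> in_layer h y -> le h x y \/ le h y x)])
  /\
  (forall h1 h2 x1 x2 y1 y2, 0 <= h1 -> h1 <= h2 ->
     in_layer h1 x1 -> in_layer h1 x2 -> le h1 x1 x2 ->
     is_anc h2 x1 y1 -> is_anc h2 x2 y2 -> le h2 y1 y2).

Definition leaf_rel (le : R -> V * R -> V * R -> Prop) (u1 u2 : V) : Prop :=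
  let h := Num.max (f u1) (f u2) in
  exists y1 y2, [/\ is_anc h (vpt u1) y1, is_anc h (vpt u2) y2 & le h y1 y2].

End MergeTreeDefs.

(* Main.v *)
Require Import Defs.
From HB Require Import structures.
From mathcomp Require Import all_boot all_order all_algebra.
From mathcomp Require Import reals.
From mathcomp Require Import lra.
Import Order.TTheory GRing.Theory Num.Theory.
Local Open Scope ring_scope.

Lemma mx (R : realType) (x y z : R) : Num.max x z < Num.max (Num.max x y) (Num.max y z) -> Num.max (Num.max x y) (Num.max y z) = y.
Proof. rewrite /Num.max; do 5 (try (case: ifPn; rewrite -?leNgt => ?)); move=> *; lra. Qed.

Section M. Context {R : realType}. Implicit Types x y z : R.
Lemma Mxl x y : x <= Num.max x y. Proof. rewrite /Num.max; case: ifPn; rewrite -?leNgt => *; lra. Qed.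
Lemma Mxr x y : y <= Num.max x y. Proof. rewrite /Num.max; case: ifPn; rewrite -?leNgt => *; lra. Qed.
Lemma Mxle x y z : x <= z -> y <= z -> Num.max x y <= z. Proof. rewrite /Num.max; case: ifPn; rewrite -?leNgt => *; lra. Qed.
Lemma Mxxx x : Num.max x x = x. Proof. rewrite /Num.max; case: ifPn; rewrite -?leNgt => *; lra. Qed.
Lemma MxC x y : Num.max x y = Num.max y x. Proof. rewrite /Num.max; do 2 (case: ifPn; rewrite -?leNgt => ?); lra. Qed.
Lemma Mxeqr x y : x <= y -> Num.max x y = y. Proof. rewrite /Num.max; case: ifPn; rewrite -?leNgt => *; lra. Qed.
Lemma Mxeql x y : y <= x -> Num.max x y = x. Proof. rewrite /Num.max; case: ifPn; rewrite -?leNgt => *; lra. Qed.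
End M.

Set Implicit Arguments.
Section Aux.
Context {R : realType} {T : merge_tree R}.
Local Notation V := (mt_V T).
Local Notation root := (@mt_root _ T).
Local Notation par := (@mt_par _ T).
Local Notation f := (@mt_f _ T).

Lemma iter_root n : iter n par root = root.
Proof. elim: n => //= n ->; exact: mt_par_root. Qed.

Lemma f_mono j v : iter j par v != root -> f v <= f (iter j par v).
Proof.
elim: j v => [|j IH] v; first by rewrite lexx.
rewrite iterSr => H.
have pv : par v != root.
  apply: contraNneq H => E; by rewrite E iter_root.
have vr : v != root by apply: contraNneq pv => ->; rewrite mt_par_root.
exact: le_trans (ltW (mt_incr vr pv)) (IH _ H).
Qed.

Lemma anc_uniq h (x y z : V * R) : is_anc h x y -> is_anc h x z -> y = z.
Proof.
case: y z => [w1 t1] [w2 t2] [[_ Py [k1 E1] _] /= e1] [[_ Pz [k2 E2] _] /= e2].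
subst t1 t2; rewrite /= in E1 E2.
wlog le12 : k1 k2 w1 w2 E1 E2 Py Pz / (k1 <= k2)%N.
  move=> W; case: (leqP k1 k2) => l; first exact: W E1 E2 Py Pz l.
  symmetry; exact: W E2 E1 Pz Py (ltnW l).
have E : iter (k2 - k1) par w1 = w2 by rewrite -E1 -iterD subnK.
case: (k2 - k1)%N E => [|j]; first by move=> /= ->.
rewrite iterSr => E.
move: Py Pz; rewrite /is_point /= => /and3P [w1r fw1 H1] /and3P [w2r fw2 _].
case/orP: H1 => [/eqP pr | lt].
  by move: w2r; rewrite -E pr iter_root eqxx.
have := f_mono j (par w1); rewrite E => /(_ w2r) m.
have : f (par w1) <= h by exact: le_trans m fw2.
by rewrite leNgt lt.
Qed.

Lemma anc_trans h h' (x y z : V * R) : is_anc h x y -> is_anc h' y z -> is_anc h' x z.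
Proof.
move=> [[Px Py [k1 E1] l1] e1] [[_ Pz [k2 E2] l2] e2]; split => //; split => //.
  by exists (k2 + k1)%N; rewrite iterD E1.
exact: le_trans l1 l2.
Qed.

Lemma anc_exists h (x : V * R) : is_point x -> x.2 <= h -> exists y, is_anc h x y.
Proof.
move=> Px xh.
have [n En] := mt_rooted x.1.
have : exists k, [&& iter k par x.1 != root, f (iter k par x.1) <= h &
            (par (iter k par x.1) == root) || (h < f (par (iter k par x.1)))].
  move: Px; rewrite /is_point => /and3P [xr fx _].
  have fxh : f x.1 <= h by exact: le_trans fx xh.
  elim: n x.1 xr fxh En => [|n IH] v vr fv En; first by move: vr; rewrite -En eqxx.
  case H: ((par v == root) || (h < f (par v))).
    by exists 0%N; rewrite /= vr fv H.
  move/negbT: H; rewrite negb_or -leNgt => /andP [pr pf].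
  have En' : iter n par (par v) = root by rewrite -iterSr.
  have [k Hk] := IH (par v) pr pf En'.
  by exists k.+1; rewrite iterSr.
move=> [k /and3P [wr fw H]].
exists (iter k par x.1, h); split => //; split => //.
- by rewrite /is_point /= wr fw H.
- by exists k.
Qed.

Lemma push h H (x a A : V * R) : is_anc h x a -> h <= H -> is_anc H x A -> is_anc H a A.
Proof.
move=> Ha hH HA.
have [y Hy] : exists y, is_anc H a y.
  apply: anc_exists; first by case: Ha => -[].
  by case: Ha => _ ->.
by rewrite -(anc_uniq (anc_trans Ha Hy) HA).
Qed.

Lemma leaf_point (u : V) : is_leaf u -> is_point (vpt u).
Proof.
case/andP => ur _; rewrite /is_point /= ur lexx /=.
case: eqP => //= /eqP pr; exact: mt_incr.
Qed.

Lemma leaf_f (u : V) : is_leaf u -> 0 <= f u.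
Proof. move=> L; exact: (proj2 (mt_lowest_leaf T) u L). Qed.

Lemma anc_self (u : V) : is_leaf u -> is_anc (f u) (vpt u) (vpt u).
Proof. move=> L; split => //; split => //; [exact: leaf_point | exact: leaf_point | by exists 0%N]. Qed.

Lemma anc_layer h (x y : V * R) : is_anc h x y -> in_layer h y.
Proof. by case=> -[]. Qed.

Lemma leaf_anc_eq (u1 u2 : V) h : is_leaf u1 -> is_leaf u2 -> f u2 = h ->
  is_anc h (vpt u1) (vpt u2) -> u1 = u2.
Proof.
move=> L1 L2 fh [[_ _ [k Ek] l] _].
case: k Ek => [|k] //= Ek.
case/andP: L2 => _ /forallP /(_ (iter k par u1)); by rewrite Ek eqxx.
Qed.

End Aux.
Unset Implicit Arguments.
Arguments leaf_f {R T} [u] _.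
Arguments anc_self {R T} [u] _.
Arguments leaf_point {R T} [u] _.
Arguments mx {R} [x y z] _.

Theorem lemma2 (R : realType) (T : merge_tree R)
    (le : R -> mt_V T * R -> mt_V T * R -> Prop) :
  layer_order le ->
  [/\ (forall u, is_leaf u -> leaf_rel le u u),
      (forall u1 u2, is_leaf u1 -> is_leaf u2 ->
         leaf_rel le u1 u2 -> leaf_rel le u2 u1 -> u1 = u2),
      (forall u1 u2 u3, is_leaf u1 -> is_leaf u2 -> is_leaf u3 ->
         leaf_rel le u1 u2 -> leaf_rel le u2 u3 -> leaf_rel le u1 u3)
    & (forall u1 u2, is_leaf u1 -> is_leaf u2 ->
         leaf_rel le u1 u2 \/ leaf_rel le u2 u1)].
Proof.
move=> [LO CO].
have h0 : forall u1 u2 : mt_V T, is_leaf u1 -> 0 <= Num.max (mt_f u1) (mt_f u2).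
  move=> u1 u2 L1; exact: le_trans (leaf_f L1) (Mxl _ _).
have ex : forall (u : mt_V T) h, is_leaf u -> mt_f u <= h -> exists y, is_anc h (vpt u) y.
  move=> u h L hu; apply: anc_exists => //; exact: leaf_point.
split.
- move=> u L; rewrite /leaf_rel Mxxx.
  exists (vpt u), (vpt u); split; try exact: anc_self.
  have [r _ _ _] := LO _ (leaf_f L); apply: r; exact: anc_layer (anc_self L).
- move=> u1 u2 L1 L2 [y1 [y2 [A1 A2 l12]]] [z2 [z1 [B2 B1 l21]]].
  move: B2 B1 l21; rewrite MxC => B2 B1.
  rewrite -(anc_uniq A1 B1) -(anc_uniq A2 B2) => l21.
  have [_ an _ _] := LO _ (h0 u1 u2 L1).
  have e := an _ _ (anc_layer A1) (anc_layer A2) l12 l21.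
  subst y2.
  case: (leP (mt_f u1) (mt_f u2)) => c.
    have mE : Num.max (mt_f u1) (mt_f u2) = mt_f u2 by exact: Mxeqr.
    rewrite mE in A1 A2.
    apply: (leaf_anc_eq L1 L2 erefl).
    by rewrite (anc_uniq A2 (anc_self L2)) in A1.
  have mE : Num.max (mt_f u1) (mt_f u2) = mt_f u1 by apply: Mxeql; exact: ltW.
  rewrite mE in A1 A2.
  symmetry; apply: (leaf_anc_eq L2 L1 erefl).
  by rewrite (anc_uniq A1 (anc_self L1)) in A2.
- move=> u1 u2 u3 L1 L2 L3 [a1 [a2 [Aa1 Aa2 la]]] [b2 [b3 [Bb2 Bb3 lb]]].
  set h12 := Num.max (mt_f u1) (mt_f u2) in Aa1 Aa2 la.
  set h23 := Num.max (mt_f u2) (mt_f u3) in Bb2 Bb3 lb.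
  set h13 := Num.max (mt_f u1) (mt_f u3).
  set H := Num.max h12 h23.
  have f1 : mt_f u1 <= h13 by exact: Mxl.
  have f3 : mt_f u3 <= h13 by exact: Mxr.
  have h13H : h13 <= H.
    apply: Mxle; [exact: le_trans (Mxl _ _) (Mxl _ _) | exact: le_trans (Mxr _ _) (Mxr _ _)].
  have h12H : h12 <= H by exact: Mxl.
  have h23H : h23 <= H by exact: Mxr.
  have f1H : mt_f u1 <= H by exact: le_trans f1 h13H.
  have f3H : mt_f u3 <= H by exact: le_trans f3 h13H.
  have f2H : mt_f u2 <= H by apply: le_trans h12H; exact: Mxr.
  have p13 : 0 <= h13 := h0 u1 u3 L1.
  have p12 : 0 <= h12 := h0 u1 u2 L1.
  have p23 : 0 <= h23 := h0 u2 u3 L2.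
  have pH : 0 <= H := le_trans p12 h12H.
  have [c1 C1] := ex u1 h13 L1 f1.
  have [c3 C3] := ex u3 h13 L3 f3.
  exists c1, c3; split => //.
  have [_ _ _ tot] := LO _ p13.
  case: (tot _ _ (anc_layer C1) (anc_layer C3)) => // l31.
  have [A1 HA1] := ex u1 H L1 f1H.
  have [A2 HA2] := ex u2 H L2 f2H.
  have [A3 HA3] := ex u3 H L3 f3H.
  have l12 : le H A1 A2 := CO _ _ _ _ _ _ p12 h12H (anc_layer Aa1) (anc_layer Aa2) la
       (push Aa1 h12H HA1) (push Aa2 h12H HA2).
  have l23 : le H A2 A3 := CO _ _ _ _ _ _ p23 h23H (anc_layer Bb2) (anc_layer Bb3) lb
       (push Bb2 h23H HA2) (push Bb3 h23H HA3).
  have l31H : le H A3 A1 := CO _ _ _ _ _ _ p13 h13H (anc_layer C3) (anc_layer C1) l31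
       (push C3 h13H HA3) (push C1 h13H HA1).
  have [rf an tr _] := LO _ pH.
  have LA1 := anc_layer HA1. have LA2 := anc_layer HA2. have LA3 := anc_layer HA3.
  have e12 : A1 = A2 := an _ _ LA1 LA2 l12 (tr _ _ _ LA2 LA3 LA1 l23 l31H).
  have e13 : A1 = A3 := an _ _ LA1 LA3 (tr _ _ _ LA1 LA2 LA3 l12 l23) l31H.
  case: (leP H h13) => c.
    have eH : h13 = H by apply/eqP; rewrite eq_le c h13H.
    rewrite eH in C1 C3.
    rewrite (anc_uniq C1 HA1) (anc_uniq C3 HA3) -e13.
    have [r _ _ _] := LO _ p13; apply: r; rewrite eH; exact: LA1.
  have eH : H = mt_f u2 by exact: mx c.
  rewrite eH in HA1 HA2.
  rewrite (anc_uniq HA2 (anc_self L2)) in e12.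
  rewrite e12 in HA1.
  have e := leaf_anc_eq L1 L2 erefl HA1.
  subst u2.
  move: c; rewrite eH => c.
  by move: (lt_le_trans c f1); rewrite ltxx.
- move=> u1 u2 L1 L2.
  have [y1 Y1] := ex u1 (Num.max (mt_f u1) (mt_f u2)) L1 (Mxl _ _).
  have [y2 Y2] := ex u2 (Num.max (mt_f u1) (mt_f u2)) L2 (Mxr _ _).
  have [_ _ _ tot] := LO _ (h0 u1 u2 L1).
  case: (tot _ _ (anc_layer Y1) (anc_layer Y2)) => l.
    by left; exists y1, y2.
  right; rewrite /leaf_rel MxC; by exists y2, y1.
Qed.
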